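(* Let $\rho\ge\chi>0$. The linear search strategy driven by a $(\rho,\chi)$-excursion profile $G_\pm$ is $(1+2\rho)$-robust and $(1+2\chi)$-consistent.
   Context: Linear search: an unknown target $T\in\mathbb{R}\setminus\{0\}$; a searcher starts at the origin and performs excursions: in an excursion to a signed endpoint $z\neq0$ it moves from the origin toward $z$, stops immediately if it reaches the target, and otherwise returns to the origin. The cost is the total distance traveled until termination. The prediction is normalized to $+1$. A deterministic strategy is a bi-infinite sequence $(y_n)_{n\in\mathbb{Z}}$ of nonzero reals with $\mathrm{sgn}(y_n)\ne\mathrm{sgn}(y_{n+1})$ and $|y_n|<|y_{n+2}|$ for all $n$; its cost on $T$ is $|T|+2\sum_{n<n_*}|y_n|$ with $n_*=\min\{n:\mathrm{sgn}(y_n)=\mathrm{sgn}(T),\ |y_n|\ge|T|\}$. A randomized strategy $Y$ is a distribution over deterministic strategies with expected cost $\mathrm{cost}_Y(T)$; it is $\rho$-robust if $\mathrm{cost}_Y(T)\le\rho|T|$ for all $T\ne0$, and $\chi$-consistent if $\mathrm{cost}_Y(+1)\le\chi$. For $\rho\ge\chi>0$, a $(\rho,\chi)$-excursion profile is a pair $G_\pm=(G_+,G_-)$ of non-decreasing, left-continuous functions $G_+,G_-:\mathbb{R}\to(0,\infty)$ such that (plus-offset) $G_+(x)\ge1$ for $x>0$ and $G_+(x)<1$ for $x<0$; (robustness) $C_+(x)\le\rho G_+(x)$ and $C_-(x)\le\rho G_-(x)$ for all $x\in\mathbb{R}$; (consistency) $C_+(0)\le\chi$; where $C_+(x):=\int_{-\infty}^{x}G_+(t)\,\mathrm{d}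 t+\int_{-\infty}^{x}G_-(t)\,\mathrm{d} t$ and $C_-(x):=\int_{-\infty}^{x+1}G_+(t)\,\mathrm{d} t+\int_{-\infty}^{x}G_-(t)\,\mathrm{d} t$. The strategy driven by $G_\pm$ uses a single $U\sim\mathrm{Unif}(0,1]$ and the excursion sequence $\cdots\to+G_+(n+U)\to-G_-(n+U)\to+G_+(n+1+U)\to-G_-(n+1+U)\to\cdots$. *)

(* Defs.v *)
From HB Require Import structures.
From mathcomp Require Import all_boot all_order all_algebra.
From mathcomp Require Import all_classical all_reals all_analysis.
Set Implicit Arguments. Unset Strict Implicit. Unset Printing Implicit Defensive.
Import Order.TTheory GRing.Theory Num.Theory.
Import numFieldNormedType.Exports.
Local Open Scope classical_set_scope.
Local Open Scope ring_scope.

Section LinearSearch.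
Variable R : realType.

(* A deterministic strategy is a bi-infinite sequence y : int -> R.
   Excursion n "finds" T iff sgn(y n) = sgn T and |y n| >= |T|. *)
Definition finds (y : int -> R) (T : R) (n : int) : Prop :=
  Num.sg (y n) = Num.sg T /\ `|T| <= `|y n|.

(* n < n_* (n_* = min {n | finds y T n}) iff no m <= n finds T. *)
Definition before_hit (y : int -> R) (T : R) (n : int) : Prop :=
  forall m : int, (m <= n)%R -> ~ finds y T m.

Definition det_cost (y : int -> R) (T : R) : \bar R :=
  (`|T|%:E + 2%:E * \esum_(n in [set n : int | before_hit y T n]) (`|y n|)%:E)%E.

(* Strategy driven by G_+, G_- with U = u :
   ... -> +G_+(n+u) -> -G_-(n+u) -> +G_+(n+1+u) -> ...
   index 2n |-> +G_+(n+u), index 2n+1 |-> -G_-(n+u). *)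
Definition driven_seq (Gp Gm : R -> R) (u : R) (k : int) : R :=
  if (k %% 2)%Z == 0 then Gp ((k %/ 2)%Z%:~R + u)
  else - Gm ((k %/ 2)%Z%:~R + u).

Definition driven_cost (Gp Gm : R -> R) (T : R) : \bar R :=
  (\int[@lebesgue_measure R]_(u in `]0%R, 1%R]) det_cost (driven_seq Gp Gm u) T)%E.

Definition robust (cost : R -> \bar R) (rho : R) : Prop :=
  forall T : R, T != 0 -> (cost T <= (rho * `|T|)%:E)%E.

Definition consistent (cost : R -> \bar R) (chi : R) : Prop :=
  (cost 1%R <= chi%:E)%E.

Definition Cplus (Gp Gm : R -> R) (x : R) : \bar R :=
  (\int[@lebesgue_measure R]_(t in `]-oo, x%R]) (Gp t)%:E
   + \int[@lebesgue_measure R]_(t in `]-oo, x%R]) (Gm t)%:E)%E.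

Definition Cminus (Gp Gm : R -> R) (x : R) : \bar R :=
  (\int[@lebesgue_measure R]_(t in `]-oo, (x + 1)%R]) (Gp t)%:E
   + \int[@lebesgue_measure R]_(t in `]-oo, x%R]) (Gm t)%:E)%E.

Definition left_continuous (G : R -> R) : Prop :=
  forall x : R, G t @[t --> x^'-] --> G x.

Definition excursion_profile (rho chi : R) (Gp Gm : R -> R) : Prop :=
  ({homo Gp : x y / x <= y} /\ {homo Gm : x y / x <= y}) /\
  (left_continuous Gp /\ left_continuous Gm) /\
  ((forall x, 0 < Gp x) /\ (forall x, 0 < Gm x)) /\
  ((forall x, 0 < x -> 1 <= Gp x) /\ (forall x, x < 0 -> Gp x < 1)) /\
  (forall x, (Cplus Gp Gm x <= (rho * Gp x)%:E)%E /\
             (Cminus Gp Gm x <= (rho * Gm x)%:E)%E) /\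
  (Cplus Gp Gm 0%R <= chi%:E)%E.

End LinearSearch.

(* Main.v *)
Require Import Defs.
From HB Require Import structures.
From mathcomp Require Import all_boot all_order all_algebra.
From mathcomp Require Import all_classical all_reals all_analysis.
From mathcomp Require Import measurable_realfun ring lra zify.
Set Implicit Arguments. Unset Strict Implicit. Unset Printing Implicit Defensive.
Import Order.TTheory GRing.Theory Num.Theory.
Import numFieldNormedType.Exports.
Local Open Scope classical_set_scope.
Local Open Scope ring_scope.

Section S.
Variable R : realType.
Local Notation mu := (@lebesgue_measure R).

Lemma le_integral_nm (D : set R) (f g : R -> \bar R) :
  (forall x, D x -> (0 <= f x)%E) -> (forall x, D x -> (f x <= g x)%E) ->
  (\int[mu]_(x in D) f x <= \int[mu]_(x in D) g x)%E.
Proof.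
move=> f0 fg.
have g0 : forall x, D x -> (0 <= g x)%E by move=> x Dx; exact: le_trans (f0 x Dx) (fg x Dx).
rewrite !ge0_integralE//; apply: le_ereal_sup => _ [h /= hf <-]; exists h => //= x.
apply: le_trans (hf x) _; rewrite /patch; case: ifPn => // /[!inE] Dx; exact: fg.
Qed.
Lemma shift_integral (h : R -> \bar R) (c : R) :
  measurable_fun [set: R] h -> (forall x, (0 <= h x)%E) ->
  (\int[mu]_(u in `]0%R, 1%R]) h (u + c)%R = \int[mu]_(x in `]c, (c + 1)%R]) h x)%E.
Proof.
move=> mh h0.
have mphi : measurable_fun [set: measurableTypeR R] ((fun u => (u + c)%R) : measurableTypeR R -> measurableTypeR R).
  by apply: continuous_measurable_fun; move=> x; apply: continuousD => //; exact: cvg_cst.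
have pre : (fun u : R => (u + c)%R) @^-1` `]c, (c + 1)%R]%classic = `]0%R, 1%R]%classic.
  apply/seteqP; split => x /=; rewrite !in_itv/= => /andP[? ?]; apply/andP; split; lra.
have H := ge0_integral_pushforward mphi mu (D := `]c, (c + 1)%R]%classic) (f := h)
  (measurable_itv _) (measurable_funS measurableT (@subsetT _ _) mh) (fun y _ => h0 y).
rewrite pre in H.
rewrite -[LHS]/(\int[mu]_(u in `]0%R, 1%R]%classic) (h \o (fun u : R => (u + c)%R)) u)%E.
rewrite -H.
apply: eq_measure_integral => /= A mA _.
apply/esym; apply: lebesgue_measure_unique => // X [[a b] _ <-] /=.
rewrite /pushforward.
have -> : (fun u : R => (u + c)%R) @^-1` `]a, b]%classic = `](a - c), (b - c)]%classic.
  apply/seteqP; split => x /=; rewrite !in_itv/= => /andP[? ?]; apply/andP; split; lra.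
rewrite !lebesgue_measure_itv/= !lte_fin.
have -> : (a - c < b - c) = (a < b) by apply/idP/idP => ?; lra.
case: ifPn => // _; congr (_%:E); rewrite /=; lra.
Qed.
Lemma avg_integral (h : R -> \bar R) (M : R) :
  measurable_fun [set: R] h -> (forall x, (0 <= h x)%E) ->
  (\int[mu]_(u in `]0%R, 1%R]) (\sum_(j <oo) h (u + (M - j.+1%:R))%R)
   = \int[mu]_(x in `]-oo, M]) h x)%E.
Proof.
move=> mh h0.
have mphi c : measurable_fun [set: measurableTypeR R] ((fun u => (u + c)%R) : measurableTypeR R -> measurableTypeR R).
  by apply: continuous_measurable_fun; move=> x; apply: continuousD => //; exact: cvg_cst.
rewrite integral_nneseries //; first last.
  move=> n; exact: measurableT_comp mh (measurable_funS measurableT (@subsetT _ _) (mphi _)).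
rewrite (@eq_eseriesr _ _ (fun j => \int[mu]_(x in `](M - j.+1%:R)%R, (M - j.+1%:R + 1)%R]) h x)%E); last first.
  by move=> j _; rewrite shift_integral.
pose F := fun j : nat => `](M - j.+1%:R), (M - j.+1%:R + 1)%R]%classic.
have FU : \bigcup_j F j = `]-oo, M]%classic.
  apply/seteqP; split => x /=.
    move=> [j _]; rewrite /F /= !in_itv/= -!natr1 => /andP[? ?].
    have := ler0n R j; lra.
  rewrite in_itv/= => xM.
  have t0 : (0 <= M - x)%R by lra.
  have /andP[t1 t2] := truncn_itv t0.
  exists (Num.trunc (M - x)) => //; rewrite /F /= in_itv/=; apply/andP; split; lra.
have tF : trivIset setT F.
  move=> i j _ _ [x []]; rewrite /F /= !in_itv/= => /andP[a1 a2] /andP[b1 b2].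
  case: (ltngtP i j) => [ij|ij|//].
  - have : (i.+1%:R <= j%:R :> R)%R by rewrite ler_nat.
    move: a1 a2 b1 b2; rewrite -!natr1 => ha1 ha2 hb1 hb2 hij; exfalso; clear -ha1 ha2 hb1 hb2 hij; lra.
  - have : (j.+1%:R <= i%:R :> R)%R by rewrite ler_nat.
    move: a1 a2 b1 b2; rewrite -!natr1 => ha1 ha2 hb1 hb2 hij; exfalso; clear -ha1 ha2 hb1 hb2 hij; lra.
rewrite -FU -ge0_integral_bigcup //.
exact: measurable_funS mh.
Qed.
Lemma esum_int_nat (f : int -> \bar R) (M : int) : (forall n, (0 <= f n)%E) ->
  (forall n, (M <= n)%R -> f n = 0%E) ->
  \esum_(n in [set: int]) f n = (\sum_(j <oo) f (M - 1 - j%:Z)%R)%E.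
Proof.
move=> f0 fM.
have -> : \esum_(n in [set: int]) f n = \esum_(n in [set n : int | (n < M)%R]) f n.
  rewrite [RHS]esum_mkcond; apply: eq_esum => n _.
  have [nM|Mn] := ltP n M; first by rewrite mem_set.
  rewrite memNset; first by rewrite fM.
  by rewrite /= ltNge Mn.
rewrite (reindex_esum [set: nat] _ (fun j : nat => M - 1 - j%:Z)%R).
  by rewrite nneseries_esumT.
split.
- move=> j _ /=; lia.
- move=> i j _ _ /=; lia.
- move=> n /= nM; exists `|(M - 1 - n)%R|%N => //; lia.
Qed.

Lemma esum_parity (g : int -> \bar R) : (forall n, (0 <= g n)%E) ->
  \esum_(k in [set: int]) g k =
  (\esum_(n in [set: int]) g (n * 2)%R + \esum_(n in [set: int]) g (n * 2 + 1)%R)%E.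
Proof.
move=> g0.
rewrite (esumID [set k : int | (k %% 2)%Z = 0]); last by move=> *; exact: g0.
congr (_ + _)%E.
- rewrite (reindex_esum [set: int] _ (fun n : int => n * 2)%R) //; split.
  + by move=> n _; split => //=; rewrite modzMl.
  + by move=> i j _ _ /= /mulIf; apply.
  + move=> k [_ /= k0]; exists (k %/ 2)%Z => //.
    by rewrite [RHS](divz_eq k 2) k0 addr0.
- rewrite (reindex_esum [set: int] _ (fun n : int => n * 2 + 1)%R) //; split.
  + by move=> n _; split => //=; rewrite modzMDl.
  + by move=> i j _ _ /= /addIr /mulIf; apply.
  + move=> k [_ /= k0]; exists (k %/ 2)%Z => //.
    rewrite [RHS](divz_eq k 2); congr (_ + _)%R.
    have := modz_ge0 k (isT : 2 != 0 :> int); have := ltz_mod k (isT : 2 != 0 :> int).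
    move: k0; case: (k %% 2)%Z => [[|[|m]]|m] //.
Qed.
Lemma cast_eq (M : int) (j : nat) (u : R) :
  ((M - 1 - j%:Z)%:~R + u = u + (M%:~R - j.+1%:R) :> R)%R.
Proof. rewrite !intrD !intrN -natr1 /=. rewrite -[j%:R]/((j%:Z)%:~R). ring. Qed.

Lemma patch_ge0 (G : R -> R) (a x : R) : (forall x, 0 < G x)%R ->
  (0 <= ((fun x => (G x)%:E) \_ `]-oo, a] x))%E.
Proof. by move=> G0; rewrite /patch; case: ifP => // _; rewrite lee_fin ltW. Qed.

Lemma esum_shift_nat (G : R -> R) (a u : R) (M : int) : (forall x, 0 < G x)%R ->
  (0 < u)%R -> (a <= M%:~R)%R ->
  \esum_(n in [set: int]) ((fun x => (G x)%:E) \_ `]-oo, a] (n%:~R + u)%R) =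
  (\sum_(j <oo) ((fun x => (G x)%:E) \_ `]-oo, a] (u + (M%:~R - j.+1%:R))%R))%E.
Proof.
move=> G0 u0 aM.
rewrite (@esum_int_nat _ M); first by apply: eq_eseriesr => j _; rewrite cast_eq.
  by move=> n; exact: patch_ge0.
move=> n Mn; have : (M%:~R <= n%:~R :> R)%R by rewrite ler_int.
move=> ?; rewrite /patch ifF //; apply/negP; rewrite inE /= in_itv /= => ?; lra.
Qed.

Lemma per_u (Gp Gm : R -> R) (T ap am u : R) (M : int) :
  (forall x, 0 < Gp x)%R -> (forall x, 0 < Gm x)%R -> (0 < u)%R ->
  (ap <= M%:~R)%R -> (am <= M%:~R)%R ->
  (forall k, before_hit (driven_seq Gp Gm u) T k ->
     if (k %% 2)%Z == 0 then ((k %/ 2)%Z%:~R + u <= ap)%R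
     else ((k %/ 2)%Z%:~R + u <= am)%R) ->
  (det_cost (driven_seq Gp Gm u) T <= `|T|%:E + 2%:E *
     (\sum_(j <oo) ((fun x => (Gp x)%:E) \_ `]-oo, ap] (u + (M%:~R - j.+1%:R))%R)
      + \sum_(j <oo) ((fun x => (Gm x)%:E) \_ `]-oo, am] (u + (M%:~R - j.+1%:R))%R)))%E.
Proof.
move=> Gp0 Gm0 u0 apM amM HB.
set hp := (fun x => (Gp x)%:E) \_ `]-oo, ap].
set hm := (fun x => (Gm x)%:E) \_ `]-oo, am].
have hp0 x : (0 <= hp x)%E by exact: patch_ge0.
have hm0 x : (0 <= hm x)%E by exact: patch_ge0.
pose g k := if (k %% 2)%Z == 0 then hp ((k %/ 2)%Z%:~R + u)%R else hm ((k %/ 2)%Z%:~R + u)%R.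
have g0 k : (0 <= g k)%E by rewrite /g; case: ifP.
rewrite /det_cost; apply: leeD2l; apply: lee_wpmul2l => //.
rewrite esum_mkcond.
apply: (@le_trans _ _ (\esum_(k in [set: int]) g k)).
  apply: le_esum => k _; case: ifPn => [/set_mem kB|_]; last exact: g0.
  have := HB k kB; rewrite /driven_seq /g; case: ifP => _ kle.
    by rewrite /hp /patch mem_set ?in_itv //= gtr0_norm.
  by rewrite /hm /patch mem_set ?in_itv //= normrN gtr0_norm.
rewrite esum_parity //.
have -> : \esum_(n in [set: int]) g (n * 2)%R = \esum_(n in [set: int]) hp (n%:~R + u)%R.
  apply: eq_esum => n _; rewrite /g.
  have -> : ((n * 2) %% 2)%Z = 0 by lia.
  have -> : ((n * 2) %/ 2)%Z = n by lia.
  by rewrite eqxx.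
have -> : \esum_(n in [set: int]) g (n * 2 + 1)%R = \esum_(n in [set: int]) hm (n%:~R + u)%R.
  apply: eq_esum => n _; rewrite /g.
  have -> : ((n * 2 + 1) %% 2)%Z = 1 by lia.
  have -> : ((n * 2 + 1) %/ 2)%Z = n by lia.
  by [].
by rewrite /hp /hm !(@esum_shift_nat _ _ _ M).
Qed.
Lemma mpatch (G : R -> R) (a : R) : {homo G : x y / (x <= y)%R} ->
  measurable_fun [set: R] ((fun x => (G x)%:E) \_ `]-oo, a]).
Proof.
move=> Gnd; apply/(measurable_restrictT _ _).1 => //.
by apply/measurable_EFinP; apply: nondecreasing_measurable.
Qed.

Lemma mser (h : R -> \bar R) (M : R) : measurable_fun [set: R] h -> (forall x, (0 <= h x)%E) ->
  measurable_fun (`]0%R, 1%R]%classic : set R) (fun u => \sum_(j <oo) h (u + (M - j.+1%:R))%R)%E.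
Proof.
move=> mh h0.
have mphi c : measurable_fun [set: measurableTypeR R] ((fun u => (u + c)%R) : measurableTypeR R -> measurableTypeR R).
  by apply: continuous_measurable_fun; move=> x; apply: continuousD => //; exact: cvg_cst.
have := @ge0_emeasurable_sum _ _ _ (`]0%R, 1%R]%classic : set R) (fun j u => h (u + (M - j.+1%:R))%R) xpredT.
apply => //.
by move=> k _; exact: measurableT_comp mh (measurable_funS measurableT (@subsetT _ _) (mphi _)).
Qed.

Lemma cost_bound (Gp Gm : R -> R) (T ap am : R) :
  {homo Gp : x y / (x <= y)%R} -> {homo Gm : x y / (x <= y)%R} ->
  (forall x, 0 < Gp x)%R -> (forall x, 0 < Gm x)%R ->
  (forall u, (0 < u)%R -> (u <= 1)%R -> forall k, before_hit (driven_seq Gp Gm u) T k ->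
     if (k %% 2)%Z == 0 then ((k %/ 2)%Z%:~R + u <= ap)%R
     else ((k %/ 2)%Z%:~R + u <= am)%R) ->
  (driven_cost Gp Gm T <= `|T|%:E + 2%:E *
     (\int[mu]_(x in `]-oo, ap]) (Gp x)%:E + \int[mu]_(x in `]-oo, am]) (Gm x)%:E))%E.
Proof.
move=> Gpnd Gmnd Gp0 Gm0 HB.
pose M := Num.ceil (Num.max ap am).
have apM : (ap <= M%:~R)%R by apply: le_trans (ceil_ge _); rewrite le_max lexx.
have amM : (am <= M%:~R)%R by apply: le_trans (ceil_ge _); rewrite le_max lexx orbT.
set hp := (fun x => (Gp x)%:E) \_ `]-oo, ap].
set hm := (fun x => (Gm x)%:E) \_ `]-oo, am].
have hp0 x : (0 <= hp x)%E by exact: patch_ge0.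
have hm0 x : (0 <= hm x)%E by exact: patch_ge0.
have mhp : measurable_fun [set: R] hp by exact: mpatch.
have mhm : measurable_fun [set: R] hm by exact: mpatch.
rewrite /driven_cost.
apply: le_trans (le_integral_nm (g := fun u => `|T|%:E + 2%:E *
     (\sum_(j <oo) hp (u + (M%:~R - j.+1%:R))%R
      + \sum_(j <oo) hm (u + (M%:~R - j.+1%:R))%R))%E _ _) _.
- by move=> u _; rewrite /det_cost adde_ge0 // mule_ge0 // esum_ge0.
- move=> u; rewrite /= in_itv /= => /andP[u0 u1].
  by apply: per_u => //; exact: HB.
have ms1 := mser M%:~R mhp hp0.
have ms2 := mser M%:~R mhm hm0.
have s10 u : (0 <= \sum_(j <oo) hp (u + (M%:~R - j.+1%:R))%R)%E by apply: nneseries_ge0.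
have s20 u : (0 <= \sum_(j <oo) hm (u + (M%:~R - j.+1%:R))%R)%E by apply: nneseries_ge0.
rewrite ge0_integralD //; first last.
- by apply: measurable_funeM; exact: emeasurable_funD.
- by move=> u _; rewrite mule_ge0 // adde_ge0.
rewrite ge0_integralZl //; first last.
- by move=> u _; rewrite adde_ge0.
- exact: emeasurable_funD.
rewrite ge0_integralD // !avg_integral //.
have Iitv (G : R -> R) (a : R) : (a <= M%:~R)%R ->
    (\int[mu]_(x in `]-oo, M%:~R]) ((fun x => (G x)%:E) \_ `]-oo, a]) x
     = \int[mu]_(x in `]-oo, a]) (G x)%:E)%E.
  move=> aM; rewrite -integral_mkcondr; congr (integral _ _ _).
  apply: setIidr => x /=; rewrite !in_itv /= => xa; exact: le_trans xa aM.
rewrite /hp /hm !Iitv //.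
rewrite integral_cst //.
have m01 : lebesgue_measure (`]0%R, 1%R]%classic : set R) = 1%E.
  by rewrite lebesgue_measure_itv /= lte_fin ltr01 sube0.
by move: m01 => /= ->; rewrite mule1.
Qed.
Lemma exists_thr (G : R -> R) (c B : R) :
  {homo G : x y / (x <= y)%R} -> left_continuous G ->
  (exists x0, G x0 < c)%R -> (forall x, G x < c -> x <= B)%R ->
  exists a, (forall x, G x < c -> x <= a)%R /\ (G a <= c)%R.
Proof.
move=> Gnd Glc [x0 Gx0] HB.
pose S := [set x | (G x < c)%R].
have hS : has_sup S by split; [exists x0 | exists B => x /HB].
exists (sup S); split; first by move=> x Sx; exact: sup_upper_bound.
have := Glc (sup S).
apply: (closed_cvg (fun r => r <= c)%R); first exact: closed_le.
near=> t.
have ta : (t < sup S)%R by near: t; exact: nbhs_left_lt.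
have [s Ss ts] := sup_adherent (ltac:(rewrite subr_gt0; exact: ta) : (0 < sup S - t)%R) hS.
rewrite opprB addrC subrK in ts.
by apply: ltW; apply: le_lt_trans (Gnd _ _ (ltW ts)) Ss.
Unshelve. all: by end_near.
Qed.
Lemma mEG (G : R -> R) (D : set R) : {homo G : x y / (x <= y)%R} ->
  measurable_fun D (fun t => (G t)%:E).
Proof.
move=> Gnd; apply/measurable_EFinP.
exact: measurable_funS measurableT (@subsetT _ _) (nondecreasing_measurable measurableT Gnd).
Qed.

Lemma int_lb (G : R -> R) (x z : R) : {homo G : x y / (x <= y)%R} ->
  (forall t, 0 < G t)%R -> (forall t, 0 < t -> 1 <= G t)%R -> (0 < x)%R -> (x <= z)%R ->
  (x%:E <= \int[mu]_(t in `]-oo, z]) (G t)%:E)%E.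
Proof.
move=> Gnd G0 G1 x0 xz.
apply: (@le_trans _ _ (\int[mu]_(t in `]0%R, x]) (G t)%:E)%E); last first.
  apply: ge0_subset_integral => //; first exact: mEG.
    by move=> t _; rewrite lee_fin ltW.
  by move=> t /=; rewrite !in_itv /= => /andP[_ tx]; exact: le_trans tx xz.
apply: (@le_trans _ _ (\int[mu]_(t in `]0%R, x]) (cst 1%E) t)%E).
  rewrite integral_cst //.
  have m0x : lebesgue_measure (`]0%R, x]%classic : set R) = x%:E.
    by rewrite lebesgue_measure_itv /= lte_fin x0 sube0.
  by move: m0x => /= ->; rewrite mul1e.
apply: ge0_le_integral => //.
- exact: mEG.
- by move=> t /=; rewrite in_itv /= => /andP[t0 _]; rewrite lee_fin G1.
Qed.

Lemma int_inf (G : R -> R) (c : R) : {homo G : x y / (x <= y)%R} -> (0 < c)%R ->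
  (forall t, c <= G t)%R -> (\int[mu]_(t in `]-oo, 0%R]) (G t)%:E = +oo)%E.
Proof.
move=> Gnd c0 cG; apply/eqP; rewrite -leye_eq.
apply: (@le_trans _ _ (\int[mu]_(t in `]-oo, 0%R]) (cst c%:E) t)%E).
  rewrite integral_cst //.
  have m0x : lebesgue_measure (`]-oo, 0%R]%classic : set R) = +oo%E.
    by rewrite lebesgue_measure_itv /= ltNye add0e.
  by move: m0x => /= ->; rewrite gt0_muley ?lte_fin.
apply: ge0_le_integral => //.
- by move=> t _; rewrite lee_fin ltW.
- exact: mEG.
- by move=> t _; rewrite lee_fin.
Qed.
Lemma main_thm (rho chi : R) (Gp Gm : R -> R) :
  (0 < chi)%R -> (chi <= rho)%R ->
  excursion_profile rho chi Gp Gm ->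
  robust (driven_cost Gp Gm) (1 + 2 * rho) /\
  consistent (driven_cost Gp Gm) (1 + 2 * chi).
Proof.
move=> chi0 chirho [[Gpnd Gmnd] [[Gplc Gmlc] [[Gp0 Gm0] [[G1 G1'] [Hrob Hcons]]]]].
have rho0 : (0 < rho)%R by exact: lt_le_trans chirho.
pose ip x := (\int[mu]_(t in `]-oo, x]) (Gp t)%:E)%E.
pose im x := (\int[mu]_(t in `]-oo, x]) (Gm t)%:E)%E.
have ip0 x : (0 <= ip x)%E by apply: integral_ge0 => t _; rewrite lee_fin ltW.
have im0 x : (0 <= im x)%E by apply: integral_ge0 => t _; rewrite lee_fin ltW.
have ipub x : (ip x <= (rho * Gp x)%:E)%E.
  by apply: le_trans (Hrob x).1; rewrite /Cplus; exact: leeDl (im0 x).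
have imub x : (im x <= (rho * Gp x)%:E)%E.
  by apply: le_trans (Hrob x).1; rewrite /Cplus; exact: leeDr (ip0 x).
have Gplb x : (0 < x)%R -> (x <= rho * Gp x)%R.
  move=> x0; rewrite -lee_fin; apply: le_trans (ipub x).
  exact: int_lb.
have Gmlb x : (0 < x)%R -> (x <= rho * Gm x)%R.
  move=> x0; rewrite -lee_fin; apply: le_trans (Hrob x).2; rewrite /Cminus.
  apply: le_trans (leeDl _ (im0 x)); apply: int_lb => //; lra.
have yE n u : driven_seq Gp Gm u (n * 2)%R = Gp (n%:~R + u)%R.
  rewrite /driven_seq.
  have -> : ((n * 2) %% 2)%Z = 0 by lia.
  have -> : ((n * 2) %/ 2)%Z = n by lia.
  by rewrite eqxx.
have yO n u : driven_seq Gp Gm u (n * 2 + 1)%R = (- Gm (n%:~R + u))%R.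
  rewrite /driven_seq.
  have -> : ((n * 2 + 1) %% 2)%Z = 1 by lia.
  have -> : ((n * 2 + 1) %/ 2)%Z = n by lia.
  by [].
have nfE T n u : (0 < T)%R -> ~ finds (driven_seq Gp Gm u) T (n * 2)%R -> (Gp (n%:~R + u) < T)%R.
  move=> T0; rewrite /finds yE (gtr0_sg (Gp0 _)) (gtr0_sg T0) => H.
  rewrite ltNge; apply/negP => le; apply: H; split => //.
  by rewrite (gtr0_norm T0) (gtr0_norm (Gp0 _)).
have nfO T n u : (T < 0)%R -> ~ finds (driven_seq Gp Gm u) T (n * 2 + 1)%R -> (Gm (n%:~R + u) < - T)%R.
  move=> T0; rewrite /finds yO.
  rewrite (ltr0_sg (T0)) (ltr0_sg (ltac:(rewrite oppr_lt0; exact: Gm0) : (- Gm (n%:~R + u) < 0)%R)) => H.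
  rewrite ltNge; apply/negP => le; apply: H; split => //.
  by rewrite (ltr0_norm T0) normrN (gtr0_norm (Gm0 _)).
split; last first.
  rewrite /consistent.
  apply: le_trans (cost_bound (T := 1%R) (ap := 0%R) (am := 0%R) Gpnd Gmnd Gp0 Gm0 _) _.
    move=> u u0 u1 k kB.
    have := nfE 1%R (k %/ 2)%Z u ltr01 (kB ((k %/ 2)%Z * 2)%R ltac:(lia)) => H.
    have H' : ((k %/ 2)%Z%:~R + u <= 0)%R.
      by rewrite leNgt; apply/negP => /G1; rewrite leNgt H.
    by case: ifP.
  apply: (@le_trans _ _ (1%:E + 2%:E * chi%:E)%E).
    by rewrite normr1; apply: leeD2l; apply: lee_wpmul2l => //; exact: Hcons.
  by rewrite -EFinM -EFinD.
move=> T T0.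
have [Tpos|Tneg] : or (0 < T)%R (T < 0)%R.
  by move: T0; rewrite neq_lt => /orP[]; [right|left].
- have [a [Ha Ga]] : exists a, (forall x, Gp x < T -> x <= a)%R /\ (Gp a <= T)%R.
    apply: (exists_thr (B := (rho * T)%R) Gpnd Gplc)...
    + have [//|nH] := pselect (exists x, Gp x < T)%R.
      have cG t : (T <= Gp t)%R by rewrite leNgt; apply/negP => h; apply: nH; exists t.
      have := ipub 0%R; rewrite /ip (int_inf Gpnd Tpos cG) leye_eq => /eqP; done.
    + move=> x Gx; have rT : (0 < rho * T)%R by rewrite mulr_gt0.
      have [x0|x0] := leP x 0%R; first lra.
      have := Gplb x x0; have : (rho * Gp x <= rho * T)%R by rewrite ler_wpM2l // ltW.
      lra.
  apply: le_trans (cost_bound (ap := a) (am := a) Gpnd Gmnd Gp0 Gm0 _) _.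
    move=> u u0 u1 k kB.
    have := nfE T (k %/ 2)%Z u Tpos (kB ((k %/ 2)%Z * 2)%R ltac:(lia)) => /Ha H.
    by case: ifP.
  apply: (@le_trans _ _ (`|T|%:E + 2%:E * (rho * Gp a)%:E)%E).
    by apply: leeD2l; apply: lee_wpmul2l => //; exact: (Hrob a).1.
  rewrite -EFinM -EFinD lee_fin (gtr0_norm Tpos).
  have : (rho * Gp a <= rho * T)%R by rewrite ler_wpM2l // ltW.
  nra.
- have nT : (0 < - T)%R by rewrite oppr_gt0.
  have [a [Ha Ga]] : exists a, (forall x, Gm x < - T -> x <= a)%R /\ (Gm a <= - T)%R.
    apply: (exists_thr (B := (rho * - T)%R) Gmnd Gmlc)...
    + have [//|nH] := pselect (exists x, Gm x < - T)%R.
      have cG t : (- T <= Gm t)%R by rewrite leNgt; apply/negP => h; apply: nH; exists t.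
      have := imub 0%R; rewrite /im (int_inf Gmnd nT cG) leye_eq => /eqP; done.
    + move=> x Gx; have rT : (0 < rho * - T)%R by rewrite mulr_gt0.
      have [x0|x0] := leP x 0%R; first lra.
      have := Gmlb x x0; have : (rho * Gm x <= rho * - T)%R by rewrite ler_wpM2l // ltW.
      lra.
  apply: le_trans (cost_bound (ap := (a + 1)%R) (am := a) Gpnd Gmnd Gp0 Gm0 _) _.
    move=> u u0 u1 k kB; case: ifP => /eqP hk.
      have := nfO T ((k %/ 2)%Z - 1) u Tneg (kB (((k %/ 2)%Z - 1) * 2 + 1)%R ltac:(lia)) => /Ha H.
      move: H; rewrite intrB /= => H; lra.
    by have := nfO T (k %/ 2)%Z u Tneg (kB ((k %/ 2)%Z * 2 + 1)%R ltac:(lia)) => /Ha H.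
  apply: (@le_trans _ _ (`|T|%:E + 2%:E * (rho * Gm a)%:E)%E).
    by apply: leeD2l; apply: lee_wpmul2l => //; exact: (Hrob a).2.
  rewrite -EFinM -EFinD lee_fin (ltr0_norm Tneg).
  have : (rho * Gm a <= rho * - T)%R by rewrite ler_wpM2l // ltW.
  nra.
Qed.
End S.

Unset Implicit Arguments.
Local Close Scope classical_set_scope.

Theorem lemma4 (R : realType) (rho chi : R) (Gp Gm : R -> R) :
  0 < chi -> chi <= rho ->
  excursion_profile rho chi Gp Gm ->
  robust (driven_cost Gp Gm) (1 + 2 * rho) /\
  consistent (driven_cost Gp Gm) (1 + 2 * chi).
Proof. exact: main_thm. Qed.
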